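(* For all positive integers $n\geq 2$ and $t$, the domination number of the Sierpiński graph $S(K_n,t)$ is $$\gamma(S(K_n,t))=\left\lceil\frac{n^t}{n+1}\right\rceil.$$
   Context: For a positive integer $n$ let $[n]=\{1,\dots,n\}$. For positive integers $n,t$, the Sierpiński graph $S(K_n,t)$ is the simple graph with vertex set $[n]^t$ (words $v_1v_2\cdots v_t$ with $v_i\in[n]$), in which $u_1\cdots u_t$ and $v_1\cdots v_t$ are adjacent if and only if there is $s\in[t]$ with $u_j=v_j$ for all $j<s$, $u_s\neq v_s$, and $u_j=v_s$ and $v_j=u_s$ for all $j>s$. A set $D$ of vertices of a graph $G$ is dominating if every vertex of $G$ lies in $D$ or is adjacent to a vertex of $D$; the domination number $\gamma(G)$ is the minimum size of a dominating set. *)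

(* Defs.v *)
From mathcomp Require Import all_boot.
Set Implicit Arguments. Unset Strict Implicit. Unset Printing Implicit Defensive.

(* Vertices of S(K_n,t): words of length t over the alphabet [n];
   letter positions 1..t are represented by 'I_t (0..t-1), letters by 'I_n. *)
Definition sword (n t : nat) := {ffun 'I_t -> 'I_n}.

Definition sierp_adj (n t : nat) (u v : sword n t) : bool :=
  [exists s : 'I_t,
     [&& [forall j : 'I_t, (j < s) ==> (u j == v j)],
         u s != v s &
         [forall j : 'I_t, (s < j) ==> ((u j == v s) && (v j == u s))]]].

Definition dominating (T : finType) (adj : rel T) (D : {set T}) : bool :=
  [forall x : T, (x \in D) || [exists y in D, adj x y]].

(* Domination number: the minimum size of a dominating set
   (the full vertex set is dominating, so #|T| is a valid start value). *)
Definition domination_number (T : finType) (adj : rel T) : nat :=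
  \big[minn/#|T|]_(D : {set T} | dominating adj D) #|D|.

(* Main.v *)
Require Import Defs.
From mathcomp Require Import all_boot zify.
Set Implicit Arguments. Unset Strict Implicit. Unset Printing Implicit Defensive.

Section Words.
Variable T : finType.

Fixpoint sadj (u v : seq T) : bool :=
  match u, v with
  | x :: u', y :: v' => if x == y then sadj u' v'
      else [&& u' == nseq (size u') y, v' == nseq (size v') x & size u' == size v']
  | _, _ => false
  end.

Lemma sadj_size u v : sadj u v -> size u = size v.
Proof.
elim: u v => [|x u IH] [|y v] //=.
case: (x == y) => [/IH -> //|/and3P [_ _ /eqP ->] //].
Qed.

Fixpoint As (c : T) (w : seq T) : bool :=
  match w with
  | nil => false
  | x :: w' => if x == c then
                 (match w' with nil => true | y :: w'' => As y w'' end)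
               else As c w'
  end.

Definition Bs (w : seq T) : bool :=
  match w with nil => true | y :: w' => As y w' end.

Lemma As_cons c x w : As c (x :: w) = if x == c then Bs w else As c w.
Proof. by []. Qed.

Definition dom (S : seq T -> bool) w := S w \/ exists v, sadj w v /\ S v.

Lemma lift_dom (S S' : seq T -> bool) x w :
  (forall v, S v -> S' (x :: v)) -> dom S w -> dom S' (x :: w).
Proof.
move=> H [Hw|[v [Hv Sv]]]; [left; exact: H|right; exists (x :: v)].
by rewrite /= eqxx Hv H.
Qed.

Lemma dom_main m :
  [/\ odd m -> forall c, As c (nseq m c),
      forall c w, size w = m -> odd m || (w != nseq m c) -> dom (As c) w,
      ~~ odd m -> forall c, Bs (nseq m c) &
      forall w, size w = m -> (~~ odd m \/ forall c, w <> nseq m c) -> dom Bs w].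
Proof.
elim: m => [|m [P1 P2 P3 P4]].
  split => //.
  - by move=> c [|//] _ /=.
  - by move=> [|//] _ _; left.
split.
- move=> Hm c; have -> : nseq m.+1 c = c :: nseq m c by [].
  rewrite As_cons eqxx; apply: P3; by move: Hm => /=; case: (odd m).
- move=> c [|x w] //= [Hs] Hc.
  case Hm: (odd m); move: Hc; rewrite Hm /=.
  +
    move=> Hne.
    have [Exc|Nxc] := eqVneq x c.
      subst x.
      have Hw : w != nseq m c by apply: contra Hne => /eqP ->.
      case/boolP: [exists j, w == nseq m j] => [/existsP [j /eqP Ej]|Nj].
        subst w. right; exists (j :: nseq m c).
        have Njc : j != c by apply: contra Hw => /eqP ->.
        split; first by rewrite /= eq_sym (negbTE Njc) !size_nseq !eqxx.
        by rewrite As_cons (negbTE Njc) P1.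
      apply: lift_dom (P4 w Hs _) => [v Hv|]; first by rewrite As_cons eqxx.
      right => j Ej; move/existsP: Nj; apply; exists j; by rewrite Ej.
    apply: lift_dom (P2 c w Hs _) => [v Hv|]; first by rewrite As_cons (negbTE Nxc).
    by rewrite Hm.
  + move=> _.
    have [Exc|Nxc] := eqVneq x c.
      subst x; apply: lift_dom (P4 w Hs _) => [v Hv|]; first by rewrite As_cons eqxx.
      by left; rewrite Hm.
    case/boolP: (w == nseq m c) => [/eqP Ew|Nw].
      subst w; right; exists (c :: nseq m x).
      split; first by rewrite /= (negbTE Nxc) !size_nseq !eqxx.
      by rewrite As_cons eqxx P3 // Hm.
    apply: lift_dom (P2 c w Hs _) => [v Hv|]; first by rewrite As_cons (negbTE Nxc).
    by rewrite Nw orbT.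
- move=> Hm c; have -> : nseq m.+1 c = c :: nseq m c by [].
  rewrite /Bs; apply: P1; by move: Hm => /=; case: (odd m).
- move=> [|x w] //= [Hs] Hc.
  apply: lift_dom (P2 x w Hs _) => [v Hv //|].
  case Hm: (odd m) => //=.
  case: Hc => [|Hc]; first by rewrite Hm.
  apply/eqP => Ew; apply: (Hc x); by rewrite Ew.
Qed.


Definition wd m (f : {ffun 'I_m -> T}) : seq T := [seq f i | i <- enum 'I_m].
Definition N m (P : seq T -> bool) := \sum_(f : {ffun 'I_m -> T}) (P (wd f) : nat).

Lemma size_wd m (f : {ffun 'I_m -> T}) : size (wd f) = m.
Proof. by rewrite size_map size_enum_ord. Qed.

Lemma N0 (P : seq T -> bool) : N 0 P = P [::].
Proof.
rewrite /N (eq_bigr (fun _ => (P [::] : nat))) => [|f _].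
  by rewrite sum_nat_const card_ffun card_ord expn0 mul1n.
by rewrite /wd (size0nil (size_enum_ord 0)).
Qed.

Lemma NS m (P : seq T -> bool) : N m.+1 P = \sum_(x : T) N m (fun w => P (x :: w)).
Proof.
rewrite /N.
pose h (p : T * {ffun 'I_m -> T}) : {ffun 'I_m.+1 -> T} :=
  [ffun i => if unlift ord0 i is Some j then p.2 j else p.1].
pose k (f : {ffun 'I_m.+1 -> T}) := (f ord0, [ffun j => f (lift ord0 j)]).
have hK : cancel h k.
  move=> [x g]; rewrite /h /k /= ffunE unlift_none; congr pair.
  by apply/ffunP => j; rewrite !ffunE liftK.
have kK : cancel k h.
  move=> f; apply/ffunP => i; rewrite /h ffunE; case: unliftP => [j ->|->] /=.
    by rewrite ffunE.
  by [].
have wh p : wd (h p) = p.1 :: wd p.2.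
  rewrite /wd enum_ordSl /= -map_comp; congr (_ :: _).
    by rewrite ffunE unlift_none.
  by apply: eq_map => j; rewrite /= ffunE liftK.
rewrite (reindex h) /=; last by exists k => ? _.
rewrite pair_bigA /=; apply: eq_bigr => p _; by rewrite wh.
Qed.

Lemma N_ext m (P Q : seq T -> bool) : (forall w, size w = m -> P w = Q w) -> N m P = N m Q.
Proof. by move=> H; apply: eq_bigr => f _; rewrite H // size_wd. Qed.

Lemma leq_bool (b1 b2 : bool) : (b1 -> b2) -> (b1 : nat) <= b2.
Proof. by case: b1; case: b2 => // /(_ isT). Qed.

Lemma N_le m (P Q : seq T -> bool) : (forall w, size w = m -> P w -> Q w) -> N m P <= N m Q.
Proof. by move=> H; apply: leq_sum => f _; apply: leq_bool; apply: H; rewrite size_wd. Qed.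

Lemma N_false m : N m (fun _ => false) = 0.
Proof. by rewrite /N big1. Qed.

Lemma N_pred1 m u : N m (pred1 u) <= 1.
Proof.
elim: m u => [|m IH] u; first by rewrite N0 leq_b1.
rewrite NS; case: u => [|u0 u].
  by rewrite big1 // => x _; rewrite (N_ext (Q := fun _ => false)) ?N_false.
rewrite (bigD1 u0) //= big1 => [|x Hx].
  rewrite addn0; apply: leq_trans (IH u); apply: N_le => w _ /=.
  by rewrite eqseq_cons eqxx.
rewrite (N_ext (Q := fun _ => false)) ?N_false // => w _ /=.
by rewrite eqseq_cons (negbTE Hx).
Qed.

Fixpoint ab m : nat * nat :=
  match m with
  | 0 => (0, 1)
  | m'.+1 => ((ab m').2 + #|T|.-1 * (ab m').1, #|T| * (ab m').1)
  end.

Lemma cnt m : (forall c, N m (As c) = (ab m).1) /\ N m Bs = (ab m).2.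
Proof.
elim: m => [|m [IA IB]]; first by split => [c|]; rewrite N0.
split => [c|]; rewrite NS.
  rewrite (bigD1 c) //.
  have -> : N m (fun w => As c (c :: w)) = N m Bs.
    by apply: N_ext => w _; rewrite As_cons eqxx.
  rewrite IB (eq_bigr (fun _ => (ab m).1)) => [|x Hx].
    by rewrite sum_nat_const cardC1.
  rewrite -(IA c); apply: N_ext => w _; by rewrite As_cons (negbTE Hx).
rewrite (eq_bigr (fun _ => (ab m).1)) => [|x _]; first by rewrite sum_nat_const.
by rewrite -(IA x).
Qed.

Lemma ab_closed m : 0 < #|T| ->
  if odd m then (#|T|.+1 * (ab m).1 = #|T| ^ m + 1 /\ #|T|.+1 * (ab m).2 + #|T| = #|T| ^ m)
  else (#|T|.+1 * (ab m).1 + 1 = #|T| ^ m /\ #|T|.+1 * (ab m).2 = #|T| ^ m + #|T|).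
Proof.
move=> Hn; elim: m => [|m IH] /=; first by rewrite muln0 muln1 expn0; split; lia.
move: IH; rewrite expnS.
case: (odd m) => /= [] [H1 H2]; move: H1 H2; case: #|T| Hn => [//|k] _ /= H1 H2;
  split; nia.
Qed.


Definition Nb m u := N m (fun w => (w == u) || sadj w u).

Lemma nseq_eq m (z x : T) : 0 < m -> (nseq m z == nseq m x) = (z == x).
Proof. by case: m => //= m _; rewrite eqseq_cons; case: eqP => [->|] //=; rewrite eqxx. Qed.

Lemma nb_bound m : 0 < #|T| -> forall u, size u = m ->
  Nb m u <= #|T|.+1 /\ (forall z, u = nseq m z -> Nb m u <= #|T|).
Proof.
move=> Hn; elim: m => [|m IH] u Hu.
  rewrite (size0nil Hu) /Nb N0 /=; split => // z _.
case: u Hu => [//|u0 u] [Hu].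
have step : Nb m.+1 (u0 :: u) <= Nb m u + \sum_(x | x != u0) (u == nseq m x : nat).
  rewrite /Nb NS (bigD1 u0) //; apply: leq_add.
    rewrite (N_ext (Q := fun w => (w == u) || sadj w u)) // => w _.
    by rewrite /= eqseq_cons !eqxx.
  apply: leq_sum => x Hx.
  case: eqP => [Eu|NEu].
    apply: leq_trans (N_pred1 m (nseq m u0)); apply: N_le => w Hw /=.
    rewrite eqseq_cons (negbTE Hx) /=.
    by move/and3P => [/eqP -> _ _]; rewrite Hw.
  rewrite (N_ext (Q := fun _ => false)) ?N_false // => w Hw /=.
  rewrite eqseq_cons (negbTE Hx) /= Hu.
  by apply/and3P => [[_ /eqP E _]].
case: m IH Hu step => [|m] IH Hu step.
  move: step; rewrite (size0nil Hu).
  have -> : Nb 0 [::] = 1 by rewrite /Nb N0.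
  rewrite (eq_bigr (fun _ => 1)) // sum_nat_const cardC1 => step.
  by split => [|z _]; move: step Hn; lia.
have [IH1 IH2] := IH u Hu.
case/boolP: [exists z, u == nseq m.+1 z] => [/existsP [z /eqP Ez]|Nz].
  have Hb := IH2 z Ez; subst u.
  rewrite (eq_bigr (fun x => (z == x : nat))) in step => [|x _]; last by rewrite nseq_eq.
  have Hs : \sum_(x | x != u0) (z == x : nat) = (z != u0).
    case: (eqVneq z u0) => [Ez0|Nz0].
      by rewrite big1 // => x Hx; rewrite Ez0 eq_sym (negbTE Hx).
    rewrite (bigD1 z) //= eqxx big1 => [//|x /andP [_ Hx]].
    by rewrite eq_sym (negbTE Hx).
  rewrite Hs in step.
  split.
    by move: step Hb; case: (z != u0) => /=; lia.
  move=> z' [E0 E1]; subst u0.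
  have : nseq m.+1 z == nseq m.+1 z' by rewrite E1.
  rewrite nseq_eq // => /eqP Ezz; subst z'.
  by move: step Hb; rewrite eqxx /=; lia.
have Hs : \sum_(x | x != u0) (u == nseq m.+1 x : nat) = 0.
  rewrite big1 // => x _; case: eqP => // E.
  by move/existsP: Nz; case; exists x; rewrite E.
rewrite Hs addn0 in step.
split; first by apply: leq_trans step _.
move=> z [E0 E1]; move/existsP: Nz; case; exists z; by rewrite E1.
Qed.

Definition adjN (x0 : T) (u v : seq T) : Prop :=
  exists s, [/\ s < size u, (forall j, j < s -> nth x0 u j = nth x0 v j),
                nth x0 u s <> nth x0 v s &
                (forall j, s < j < size u -> nth x0 u j = nth x0 v s /\ nth x0 v j = nth x0 u s)].

Lemma adjN_sadj x0 u v : size u = size v -> (adjN x0 u v <-> sadj u v).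
Proof.
elim: u v => [|x u IH] [|y v] //=; first by move=> _; split => // [[s []]].
move=> [Hs].
split.
- move=> [[|s] [Hl Hb Hne Ha]] /=.
    have Nxy : x != y by apply/eqP.
    rewrite (negbTE Nxy).
    apply/and3P; split; last (by rewrite Hs); apply/eqP/all_pred1P/(all_nthP x0) => j Hj.
      by have [/= -> _] := Ha j.+1 Hj.
    rewrite -Hs in Hj.
    by have [_ /= ->] := Ha j.+1 Hj.
  have /= Exy := Hb 0 isT; rewrite Exy eqxx.
  apply/(IH v Hs); exists s; split => //.
  + by move=> j Hj; apply: (Hb j.+1).
  + by move=> j Hj; apply: (Ha j.+1).
- case: eqP => [Exy|Nxy].
    move=> /(IH v Hs) [s [Hl Hb Hne Ha]]; exists s.+1; split => //=.
    + by move=> [|j] //= Hj; apply: Hb.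
    + by move=> [|j] //= Hj; apply: Ha.
  move=> /and3P [/eqP/all_pred1P/(all_nthP x0) Eu /eqP/all_pred1P/(all_nthP x0) Ev _].
  exists 0; split => //= [[|j]] //= Hj.
  split; apply/eqP; [apply: Eu | apply: Ev]; first by [].
  by rewrite -Hs.
Qed.

End Words.

Lemma nth_wd n t (f : {ffun 'I_t -> 'I_n}) x0 (i : 'I_t) : nth x0 (wd f) i = f i.
Proof. by rewrite /wd (nth_map i) ?size_enum_ord // nth_ord_enum. Qed.

Lemma sierp_adj_wd n t (f g : sword n t) x0 : sierp_adj f g <-> adjN x0 (wd f) (wd g).
Proof.
split.
- move/existsP => [s /and3P [/forallP Hb Hne /forallP Ha]].
  exists s; split.
  + by rewrite size_wd.
  + move=> j Hj; have Hjt : j < t by apply: ltn_trans Hj (ltn_ord s).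
    have := Hb (Ordinal Hjt); rewrite /= Hj /= => /eqP.
    by change j with (nat_of_ord (Ordinal Hjt)); rewrite !nth_wd.
  + by rewrite !nth_wd; apply/eqP.
  + move=> j /andP [Hsj Hjt]; rewrite size_wd in Hjt.
    change j with (nat_of_ord (Ordinal Hjt)); rewrite !nth_wd.
    by have := Ha (Ordinal Hjt); rewrite /= Hsj /= => /andP [/eqP -> /eqP ->].
- move=> [s [Hs Hb Hne Ha]]; rewrite size_wd in Hs.
  apply/existsP; exists (Ordinal Hs); apply/and3P; split.
  + apply/forallP => j; apply/implyP => Hj; apply/eqP.
    by have := Hb j Hj; rewrite !nth_wd.
  + move: Hne; change s with (nat_of_ord (Ordinal Hs)); rewrite !nth_wd => Hne.
    by apply/eqP.
  + apply/forallP => j; apply/implyP => Hj.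
    have [] := Ha j; first by rewrite Hj size_wd ltn_ord.
    change s with (nat_of_ord (Ordinal Hs)); rewrite !nth_wd => -> ->.
    by rewrite !eqxx.
Qed.

Lemma wd_nth n t (v : seq 'I_n) x0 : size v = t -> wd ([ffun i : 'I_t => nth x0 v i]) = v.
Proof.
move=> Hv; apply: (@eq_from_nth _ x0); first by rewrite size_wd.
move=> i; rewrite size_wd => Hi.
by change i with (nat_of_ord (Ordinal Hi)); rewrite nth_wd ffunE.
Qed.

Lemma bigmin_le_seq (I : eqType) (r : seq I) (F : I -> nat) x0 j :
  j \in r -> \big[minn/x0]_(i <- r) F i <= F j.
Proof.
elim: r => [//|i r IH]; rewrite inE big_cons => /orP [/eqP ->|Hj].
  exact: geq_minl.
exact: leq_trans (geq_minr _ _) (IH Hj).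
Qed.

Theorem theorem3p1 (n t : nat) : 2 <= n -> 0 < t ->
  domination_number (@sierp_adj n t) = (n ^ t + n) %/ n.+1.
Proof.
move=> Hn _.
have Hn0 : 0 < n by apply: leq_trans Hn.
pose c : 'I_n := Ordinal Hn0.
have HT : #|'I_n| = n := card_ord n.
set g := (n ^ t + n) %/ n.+1.
have low : forall D : {set sword n t}, dominating (@sierp_adj n t) D -> g <= #|D|.
  move=> D /forallP HD.
  have key : n ^ t <= #|D| * n.+1.
    have -> : n ^ t = \sum_(x : sword n t) 1.
      by rewrite sum_nat_const card_ffun !card_ord muln1.
    apply: (@leq_trans (\sum_(x : sword n t) \sum_(d in D) ((x == d) || sierp_adj x d : nat))).
      apply: leq_sum => x _; case/orP: (HD x) => [xD | /existsP [y /andP [yD Hxy]]].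
        by rewrite (bigD1 x) //= eqxx /=; apply: leq_addr.
      by rewrite (bigD1 y) //= Hxy orbT /=; apply: leq_addr.
    rewrite exchange_big /=.
    have Hbound : forall d : sword n t,
        \sum_(x : sword n t) ((x == d) || sierp_adj x d : nat) <= n.+1.
      move=> d; apply: (@leq_trans (Nb t (wd d))).
        rewrite /Nb /N; apply: leq_sum => x _; apply: leq_bool => /orP [/eqP -> | H].
          by rewrite eqxx.
        apply/orP; right; apply/(adjN_sadj c); first by rewrite !size_wd.
        by apply/(sierp_adj_wd _ _ c).
      have [H1 _] := nb_bound (T := 'I_n) (m := t) (ltac:(by rewrite HT)) (size_wd d).
      by rewrite HT in H1.
    apply: (@leq_trans (\sum_(d in D) n.+1)); last by rewrite sum_nat_const.
    by apply: leq_sum => d _; apply: Hbound.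
  rewrite /g -ltnS ltn_divLR //; nia.
pose F := if odd t then As c else (@Bs 'I_n).
pose D0 := [set f : sword n t | F (wd f)].
have domD0 : dominating (@sierp_adj n t) D0.
  apply/forallP => x.
  have [_ P2 _ P4] := dom_main 'I_n t.
  have Hd : dom F (wd x).
    rewrite /F; case Ht: (odd t).
      by apply: P2; rewrite ?size_wd ?Ht.
    by apply: P4; [exact: size_wd | left; rewrite Ht].
  case: Hd => [Fx | [v [Hv Fv]]].
    by rewrite inE Fx.
  apply/orP; right; apply/existsP.
  have Hsv : size v = t by rewrite -(sadj_size Hv) size_wd.
  exists [ffun i : 'I_t => nth c v i]; rewrite inE wd_nth // Fv /=.
  apply/(sierp_adj_wd _ _ c); rewrite wd_nth //; apply/(adjN_sadj c) => //.
  by rewrite size_wd.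
have cardD0 : #|D0| = g.
  have -> : #|D0| = N t F.
    rewrite /N -sum1_card big_mkcond /=; apply: eq_bigr => f _; rewrite inE.
    by case: (F (wd f)).
  have [IA IB] := cnt 'I_n t.
  have := ab_closed (T := 'I_n) t; rewrite HT => /(_ Hn0).
  rewrite /F /g; case: (odd t) => [] [H1 H2]; [rewrite IA | rewrite IB].
    rewrite (_ : n ^ t + n = (ab 'I_n t).1 * n.+1 + n.-1); last by lia.
    by rewrite divnMDl // divn_small ?addn0 //; lia.
  rewrite (_ : n ^ t + n = (ab 'I_n t).2 * n.+1); last by lia.
  by rewrite mulnK.
rewrite /domination_number.
apply/eqP; rewrite eqn_leq; apply/andP; split.
  rewrite -cardD0 -big_filter; apply: bigmin_le_seq.
  by rewrite mem_filter domD0 mem_index_enum.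
apply: (big_ind (fun x => g <= x)).
- rewrite -cardsT; apply: low; apply/forallP => x; by rewrite in_setT.
- by move=> x y Hx Hy; rewrite leq_min Hx Hy.
- by move=> D HD; apply: low.
Qed.
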